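(* Let $C$ be an $(n,k)$ linear code over $H(\mathbb{Z})_{1+e_1+e_2}$. If $C$ corrects all errors of Lipschitz weight $2$ or less, then $(3^2)^{n-k}\ge 32n^2-24n+1$.
   Context: $H(\mathbb{Z})=\{a_0+a_1e_1+a_2e_2+a_3e_3:a_i\in\mathbb{Z}\}$ (Lipschitz integers) with quaternion multiplication $e_1^2=e_2^2=e_3^2=-1$, $e_1e_2=-e_2e_1=e_3$, $e_3e_1=-e_1e_3=e_2$, $e_2e_3=-e_3e_2=e_1$; $N(q)=a_0^2+a_1^2+a_2^2+a_3^2$. Right congruence: $q_1\equiv_r q_2 \pmod\pi$ iff $q_1-q_2=\delta\pi$ for some $\delta\in H(\mathbb{Z})$; $H(\mathbb{Z})_\pi=H(\mathbb{Z})/H(\mathbb{Z})\pi$, which has $N(\pi)^2$ elements (here $N(1+e_1+e_2)=3$). The Lipschitz weight of a class $\gamma$ is $\min\{|a_0|+|a_1|+|a_2|+|a_3| : a_0+a_1e_1+a_2e_2+a_3e_3\in\gamma\}$; the weight of a vector is the sum of the weights of its components. An $(n,k)$ linear code over $H(\mathbb{Z})_\pi$ is an additive subgroup $C\subseteq H(\mathbb{Z})_\pi^n$ such that $H(\mathbb{Z})_\pi^n/C$ has exactly $(N(\pi)^2)^{n-k}$ cosets. $C$ corrects all errors of weight $t$ or less if all vectors of Lipschitz weight at most $t$ lie in pairwise distinct cosets of $C$. *)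

(* Defs.v *)
From HB Require Import structures.
From mathcomp Require Import all_boot all_order all_algebra.
Set Implicit Arguments. Unset Strict Implicit. Unset Printing Implicit Defensive.
Import Order.TTheory GRing.Theory Num.Theory.

(* Lipschitz integers a0 + a1 e1 + a2 e2 + a3 e3 with a_i in Z *)
Record quat := Quat { q0 : int; q1 : int; q2 : int; q3 : int }.

Local Open Scope ring_scope.

Definition qadd (a b : quat) : quat :=
  Quat (q0 a + q0 b) (q1 a + q1 b) (q2 a + q2 b) (q3 a + q3 b).
Definition qopp (a : quat) : quat := Quat (- q0 a) (- q1 a) (- q2 a) (- q3 a).
Definition qsub (a b : quat) : quat := qadd a (qopp b).
Definition qzero : quat := Quat 0 0 0 0.

(* Hamilton product: e1^2=e2^2=e3^2=-1, e1e2=e3, e2e3=e1, e3e1=e2 *)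
Definition qmul (a b : quat) : quat :=
  Quat (q0 a * q0 b - q1 a * q1 b - q2 a * q2 b - q3 a * q3 b)
       (q0 a * q1 b + q1 a * q0 b + q2 a * q3 b - q3 a * q2 b)
       (q0 a * q2 b - q1 a * q3 b + q2 a * q0 b + q3 a * q1 b)
       (q0 a * q3 b + q1 a * q2 b - q2 a * q1 b + q3 a * q0 b).

Definition qpi : quat := Quat 1 1 1 0.

Definition rcong (a b : quat) : Prop := exists d : quat, qsub a b = qmul d qpi.

Definition l1 (q : quat) : nat :=
  (`|q0 q| + `|q1 q| + `|q2 q| + `|q3 q|)%N.

(* w is the Lipschitz weight of the class of q in H(Z)_pi:
   the minimum of l1 over the class *)
Definition is_lweight (q : quat) (w : nat) : Prop :=
  (exists q', rcong q' q /\ l1 q' = w) /\ (forall q', rcong q' q -> (w <= l1 q')%N).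

(* Vectors of length n over H(Z) (representatives of vectors over H(Z)_pi) *)
Definition qvec (n : nat) := 'I_n -> quat.
Definition vsub n (u v : qvec n) : qvec n := fun i => qsub (u i) (v i).
Definition vadd n (u v : qvec n) : qvec n := fun i => qadd (u i) (v i).
Definition vopp n (u : qvec n) : qvec n := fun i => qopp (u i).
Definition vzero (n : nat) : qvec n := fun _ => qzero.
Arguments vzero n _ : clear implicits.

Definition vcong n (u v : qvec n) : Prop := forall i, rcong (u i) (v i).

Definition vweight_le n (u : qvec n) (t : nat) : Prop :=
  exists w : 'I_n -> nat, (forall i, is_lweight (u i) (w i)) /\ (\sum_(i < n) w i <= t)%N.

(* A subset C of H(Z)_pi^n is represented by its preimage in H(Z)^n,
   i.e. a predicate on representatives that is a union of classes.
   (n,k) linear code: additive subgroup with exactly (N(pi)^2)^(n-k) = 9^(n-k)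
   cosets, expressed as the existence of a complete, irredundant system of
   coset representatives of that size. *)
Definition linear_code (n k : nat) (C : qvec n -> Prop) : Prop :=
  [/\ (forall u v, vcong u v -> C u -> C v),
      C (vzero n),
      (forall u v, C u -> C v -> C (vadd u v)),
      (forall u, C u -> C (vopp u)) &
      exists reps : seq (qvec n),
        [/\ size reps = ((3 ^ 2) ^ (n - k))%N,
            (forall i j, (i < size reps)%N -> (j < size reps)%N -> i <> j ->
               ~ C (vsub (nth (vzero n) reps i) (nth (vzero n) reps j))) &
            (forall u, exists2 i, (i < size reps)%N & C (vsub u (nth (vzero n) reps i)))]].

Definition corrects n (C : qvec n -> Prop) (t : nat) : Prop :=
  forall u v : qvec n, vweight_le u t -> vweight_le v t ->
    C (vsub u v) -> vcong u v.

(* Main.v *)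
Require Import Defs.
From mathcomp Require Import all_boot all_order all_algebra.
From mathcomp Require Import zify ring.
From Stdlib Require Import ClassicalEpsilon.
Import GRing.Theory Num.Theory.


Definition f1 (q : quat) : int := (q0 q + q1 q + q2 q)%R.
Definition f2 (q : quat) : int := (q0 q - q2 q + q3 q)%R.

Lemma rcong_inv a b : rcong a b ->
  exists k1 k2 : int, (f1 a - f1 b = 3 * k1 /\ f2 a - f2 b = 3 * k2)%R.
Proof.
case=> [[d0 d1 d2 d3]]; case: a => a0 a1 a2 a3; case: b => b0 b1 b2 b3.
rewrite /qsub /qadd /qopp /qmul /qpi /f1 /f2 /=; case=> e0 e1 e2 e3.
exists d0, (- d2)%R; split; lia.
Qed.

Definition unit_of (a : 'I_8) : quat :=
  nth qzero [:: Quat 1 0 0 0; Quat (-1) 0 0 0; Quat 0 1 0 0; Quat 0 (-1) 0 0;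
              Quat 0 0 1 0; Quat 0 0 (-1) 0; Quat 0 0 0 1; Quat 0 0 0 (-1)] a.

Definition optq (o : option 'I_8) : quat :=
  if o is Some a then unit_of a else qzero.

Lemma optq_inj o1 o2 : rcong (optq o1) (optq o2) -> o1 = o2.
Proof.
move/rcong_inv=> [k1 [k2 []]].
case: o1 => [[[|[|[|[|[|[|[|[|//]]]]]]]] ?]|];
case: o2 => [[[|[|[|[|[|[|[|[|//]]]]]]]] ?]|];
rewrite /optq /unit_of /f1 /f2 /= => H1 H2;
first [ lia | reflexivity | (congr Some; apply: val_inj; reflexivity)].
Qed.


Lemma rcong_refl x : rcong x x.
Proof.
exists qzero; case: x => ????; rewrite /qsub /qadd /qopp /qmul /=; congr Quat; ring.
Qed.

Lemma optq_weight o : is_lweight (optq o) (if o is Some _ then 1 else 0).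
Proof.
split; first by exists (optq o); split; [exact: rcong_refl|
  case: o => [[[|[|[|[|[|[|[|[|//]]]]]]]] ?]|]].
case: o => [a|] q' // /rcong_inv [k1 [k2 []]].
case: q' => x0 x1 x2 x3; rewrite /l1 /=.
case: a => [[|[|[|[|[|[|[|[|//]]]]]]]] ?];
rewrite /optq /unit_of /f1 /f2 /= => H1 H2; lia.
Qed.


Definition vec {n} (s : {ffun 'I_n -> option 'I_8}) : qvec n := fun i => optq (s i).

Lemma vec_weight n (s : {ffun 'I_n -> option 'I_8}) (l : seq 'I_n) :
  size l <= 2 -> (forall x, s x != None -> x \in l) -> vweight_le (vec s) 2.
Proof.
move=> Hl Hs; exists (fun i => if s i is Some _ then 1 else 0); split.
  by move=> i; exact: optq_weight.
apply: leq_trans Hl; apply: leq_trans (card_size l).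
rewrite -sum1_card [X in _ <= X]big_mkcond /=; apply: leq_sum => i _.
case E: (s i) => [a|] //; by rewrite Hs ?E.
Qed.

Lemma vec_inj n (s t : {ffun 'I_n -> option 'I_8}) : vcong (vec s) (vec t) -> s = t.
Proof. by move=> H; apply/ffunP => i; apply: optq_inj; exact: H. Qed.

Lemma cancel_cong n (u v r : qvec n) :
  vcong (vadd (vsub u r) (vopp (vsub v r))) (vsub u v).
Proof.
move=> i; exists qzero; case: (u i) (v i) (r i) => ???? [????] [????].
rewrite /qsub /qadd /qopp /qmul /=; congr Quat; ring.
Qed.


Definition D (n : nat) : finType :=
  ((unit + ('I_n * 'I_8)) + ({j : 'I_n & 'I_j} * 'I_8 * 'I_8))%type.

Definition wid {n} {j : 'I_n} (i : 'I_j) : 'I_n := widen_ord (ltnW (ltn_ord j)) i.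

Definition enc {n} (d : D n) : {ffun 'I_n -> option 'I_8} :=
 match d with
 | inl (inl _) => [ffun _ => None]
 | inl (inr (i,a)) => [ffun x => if x == i then Some a else None]
 | inr (existT j i, a, b) =>
    [ffun x => if x == wid i then Some a else if x == j then Some b else None]
 end.

Lemma pair_eq n (j j' : 'I_n) (i : 'I_j) (i' : 'I_j') :
  j = j' -> (i : nat) = i' -> existT (fun j : 'I_n => 'I_j) j i = existT _ j' i'.
Proof. by move=> ej; subst; move=> /val_inj ->. Qed.

Lemma wid_lt {n} {j : 'I_n} (i : 'I_j) : wid i < j.
Proof. by rewrite /wid /=. Qed.

Lemma enc_inj n : injective (@enc n).
Proof.
move=> d1 d2 E; have E' : forall x, enc d1 x = enc d2 x by move=> x; rewrite E.
case: d1 E E' => [[[]|[i a]]|[[[j i] a] b]];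
case: d2 => [[[]|[i' a']]|[[[j' i'] a'] b']] //= E E'.
- by move: (E' i'); rewrite !ffunE eqxx.
- by move: (E' (wid i')); rewrite !ffunE eqxx.
- by move: (E' i); rewrite !ffunE eqxx.
- move: (E' i); rewrite !ffunE eqxx; case: eqP => // -> [->] //.
- move: (E' (wid i')) (E' j'); rewrite !ffunE !eqxx.
  have Hlt := wid_lt i'.
  have nj : (j' == wid i') = false by apply/eqP => h; move: Hlt; rewrite -h ltnn.
  rewrite nj; case: eqP => // Hi _; by rewrite -Hi nj.
- by move: (E' (wid i)); rewrite !ffunE eqxx.
- move: (E' (wid i)) (E' j); rewrite !ffunE !eqxx.
  have Hlt := wid_lt i.
  have nj : (j == wid i) = false by apply/eqP => h; move: Hlt; rewrite -h ltnn.
  rewrite nj; case: eqP => // Hi _; by rewrite -Hi nj.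
- move: (E' (wid i)) (E' j) (E' (wid i')); rewrite !ffunE !eqxx.
  have l1 := wid_lt i; have l2 := wid_lt i'.
  have nj : (j == wid i) = false by apply/eqP => h; move: l1; rewrite -h ltnn.
  rewrite nj => H1 H2 H3.
  have ex : wid i = wid i'.
    move: H1; case: (wid i =P wid i') => // _.
    case: (wid i =P j') => // e1 _.
    move: H3; case: (wid i' =P wid i) => [e|_]; first by rewrite e.
    case: (wid i' =P j) => // e2 _.
    move/(congr1 (@nat_of_ord n)): e1; move/(congr1 (@nat_of_ord n)): e2; move: l1 l2; lia.
  have ey : j = j'.
    move: H2; case: (j =P wid i') => [e|_]; first by move/(congr1 (@nat_of_ord n)): e; move/(congr1 (@nat_of_ord n)): ex; move: l1; lia.
    by case: (j =P j').
  subst j'.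
  move: H1 H2; rewrite ex !eqxx.
  have nj' : (j == wid i') = false by apply/eqP => h; move: l2; rewrite -h ltnn.
  rewrite nj' => -[->] [->].
  congr (inr (_, _, _)); apply: pair_eq => //.
  by move: ex => /(congr1 val).
Qed.


Lemma enc_weight n (d : D n) : vweight_le (vec (enc d)) 2.
Proof.
case: d => [[[]|[i a]]|[[[j i] a] b]].
- by apply: (@vec_weight _ _ [::]) => // x; rewrite ffunE.
- apply: (@vec_weight _ _ [:: i]) => // x; rewrite ffunE inE.
  by case: (x == i).
- apply: (@vec_weight _ _ [:: wid i; j]) => // x; rewrite ffunE !inE.
  by case: (x == wid i) => //=; case: (x == j).
Qed.

Lemma sumT n : 2 * (\sum_(j < n) j) = n * n.-1.
Proof.
elim: n => [|n IH]; first by rewrite big_ord0.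
rewrite big_ord_recr /= mulnDr IH; case: n {IH} => //= n; lia.
Qed.

Lemma cardD n : #|{: D n}| = 1 + 8 * n + 64 * (\sum_(j < n) j).
Proof.
rewrite /D !card_sum !card_prod card_unit !card_ord card_tagged.
rewrite sumnE big_map big_enum /=.
rewrite (eq_bigr (fun j : 'I_n => (j : nat))); last by move=> j _; rewrite card_ord.
have -> : \sum_(i in 'I_n) (i:nat) = \sum_(j < n) j by apply: eq_bigl.
lia.
Qed.


Theorem theorem7 (n k : nat) (C : qvec n -> Prop) :
  @linear_code n k C -> corrects C 2 ->
  (32 * n ^ 2 - 24 * n + 1 <= (3 ^ 2) ^ (n - k))%N.
Proof.
move=> [Hcl H0 Hadd Hopp [reps [Hsz Hdist Hcov]]] Hcorr.
have pick : forall d : D n,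
    {i : 'I_(size reps) | C (vsub (vec (enc d)) (nth (vzero n) reps i))}.
  move=> d.
  have ex : exists i : 'I_(size reps), C (vsub (vec (enc d)) (nth (vzero n) reps i)).
    by have [i Hi HC] := Hcov (vec (enc d)); exists (Ordinal Hi).
  exact: constructive_indefinite_description ex.
pose g d := sval (pick d).
have g_inj : injective g.
  move=> d1 d2 E; apply: enc_inj; apply: vec_inj; apply: Hcorr; try exact: enc_weight.
  have h1 := svalP (pick d1); have h2 := svalP (pick d2).
  rewrite -/(g d1) E in h1; rewrite -/(g d2) in h2.
  apply: (Hcl _ _ (cancel_cong n (vec (enc d1)) (vec (enc d2)) (nth (vzero n) reps (g d2)))).
  by apply: Hadd => //; apply: Hopp.
have := @leq_card _ _ g g_inj; rewrite card_ord cardD -Hsz => Hle.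
apply: leq_trans Hle.
have := sumT n; move: (\sum_(j < n) j) => T; case: n {Hcl H0 Hadd Hopp reps Hsz Hdist Hcov Hcorr pick g g_inj C} => [|m] /=; nia.
Qed.
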